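(* Let $W$ be the affine Weyl group of an irreducible reduced crystallographic root system of rank 2, with simple generators $s_0,s_1,s_2$ and $W_0=\langle s_1,s_2\rangle$. Let $H_{r_0},H_{r_1}$ be adjacent parallel hyperplanes ($H_{\alpha,c}$ and $H_{\alpha,c+1}$ for some root $\alpha$, $c\in\mathbb{Z}$) and suppose both the alcove $w\in W$ and the identity alcove lie in the strip between them. Suppose $D_R(w)=\{0,i\}$ with $i\in\{1,2\}$. If $(s_0s_i)^2\neq 1$, then $ws_i$ is the minimal length element of the coset $wW_0$.
   Context: $W$ is generated by the reflections in the lines $H_{\beta,k}=\{v:\langle v,\beta\rangle=k\}$ ($\beta$ a root, $k\in\mathbb{Z}$) in a Euclidean plane; its simple generators $s_0,s_1,s_2$ are the reflections in the walls of the fundamental alcove $A_0$, $s_0$ being the reflection in the wall not through the origin, and $W_0=\langle s_1,s_2\rangle$. Elements are identified with alcoves via $w\mapsto wA_0$. $\ell$ is Coxeter length; $D_R(w)=\{j:\ell(ws_j)<\ell(w)\}$. *)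

(* Defs.v *)
From HB Require Import structures.
From mathcomp Require Import all_boot all_order all_algebra.
From mathcomp Require Import boolp Rstruct.
Set Implicit Arguments. Unset Strict Implicit. Unset Printing Implicit Defensive.
Import Order.TTheory GRing.Theory Num.Theory.
Local Open Scope ring_scope.

Notation R := Rdefinitions.R.

(* Irreducible reduced crystallographic root systems of rank 2, up to
   isomorphism: A2, B2 (= C2), G2. *)
Inductive rs_type := A2 | B2 | G2.

(* Points of the Euclidean plane V, written in coordinates w.r.t. the basis of
   simple roots alpha_1, alpha_2: (x1, x2) stands for x1 alpha_1 + x2 alpha_2. *)
Definition V := (R * R)%type.

(* Gram matrix of the simple roots (g11, g12, g22).
   A2: |a1|^2 = |a2|^2 = 2, angle 120 deg.
   B2: a1 long (|a1|^2 = 2), a2 short (|a2|^2 = 1), angle 135 deg.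
   G2: a1 short (|a1|^2 = 2), a2 long (|a2|^2 = 6), angle 150 deg. *)
Definition gram (t : rs_type) : int * int * int :=
  match t with
  | A2 => (2, -1, 2)%R
  | B2 => (2, -1, 1)%R
  | G2 => (2, -3, 6)%R
  end.

Definition ip (t : rs_type) (v u : V) : R :=
  let: (g11, g12, g22) := gram t in
  g11%:~R * v.1 * u.1 + g12%:~R * (v.1 * u.2 + v.2 * u.1) + g22%:~R * v.2 * u.2.

(* Positive roots, as integer coefficients on (alpha_1, alpha_2). *)
Definition pos_roots (t : rs_type) : seq (int * int) :=
  match t with
  | A2 => [:: (1, 0); (0, 1); (1, 1)]
  | B2 => [:: (1, 0); (0, 1); (1, 1); (1, 2)]
  | G2 => [:: (1, 0); (0, 1); (1, 1); (2, 1); (3, 1); (3, 2)]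
  end%R.

Definition root_list (t : rs_type) : seq (int * int) :=
  pos_roots t ++ [seq (- b.1, - b.2)%R | b <- pos_roots t].

Definition highest_root (t : rs_type) : int * int :=
  match t with
  | A2 => (1, 1)
  | B2 => (1, 2)
  | G2 => (3, 2)
  end%R.

Definition rvec (b : int * int) : V := (b.1%:~R, b.2%:~R).

Definition pairing (t : rs_type) (v : V) (b : int * int) : R := ip t v (rvec b).

Definition refl (t : rs_type) (b : int * int) (k : int) (v : V) : V :=
  let c := 2%:R * (pairing t v b - k%:~R) / ip t (rvec b) (rvec b) in
  (v.1 - c * (rvec b).1, v.2 - c * (rvec b).2).

Definition A0 (t : rs_type) : V -> Prop :=
  fun v => forall b, b \in pos_roots t -> 0 < pairing t v b < 1.

Definition sgen (t : rs_type) (j : 'I_3) : V -> V :=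
  match val j with
  | 0%N => refl t (highest_root t) 1
  | 1%N => refl t (1, 0)%R 0
  | _ => refl t (0, 1)%R 0
  end.

(* Elements of W are represented by words in the simple generators;
   the word j_1 ... j_m acts as s_{j_1} o ... o s_{j_m}, so that
   act (w ++ u) = act w o act u.  Two words represent the same element of W
   iff they induce the same map V -> V. *)
Definition act (t : rs_type) (w : seq 'I_3) : V -> V :=
  foldr (fun j f => sgen t j \o f) id w.

Lemma length_exists (t : rs_type) (w : seq 'I_3) :
  exists n, `[< exists u : seq 'I_3, size u = n /\ act t u = act t w >].
Proof. by exists (size w); apply/asboolP; exists w. Qed.

Definition len (t : rs_type) (w : seq 'I_3) : nat := ex_minn (length_exists t w).

Definition alcove (t : rs_type) (w : seq 'I_3) : V -> Prop :=
  fun v => exists2 x, A0 t x & v = act t w x.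

Definition in_strip (t : rs_type) (b : int * int) (c : int) (X : V -> Prop) :=
  forall v, X v -> c%:~R < pairing t v b < (c + 1)%:~R.

Definition W0word (u : seq 'I_3) : bool := all (fun j : 'I_3 => val j != 0%N) u.

(* Main.v *)
Require Import Defs.
From HB Require Import structures.
From mathcomp Require Import all_boot all_order all_algebra.
From mathcomp Require Import boolp Rstruct.
From mathcomp Require Import ring lra zify.
Import Order.TTheory GRing.Theory Num.Theory.
Local Open Scope ring_scope.

Definition mat := (int * int * int * int)%type.
Definition st := (mat * (int * int))%type.

Definition mmul (M N : mat) : mat :=
  let: (a, b, c, d) := M in let: (e, f, g, h) := N in
  (a * e + b * g, a * f + b * h, c * e + d * g, c * f + d * h).
Definition mvec (M : mat) (z : int * int) : int * int :=
  let: (a, b, c, d) := M in (a * z.1 + b * z.2, c * z.1 + d * z.2).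
Definition scomp (S T : st) : st :=
  (mmul S.1 T.1, ((mvec S.1 T.2).1 + S.2.1, (mvec S.1 T.2).2 + S.2.2)).
Definition sid : st := ((1, 0, 0, 1), (0, 0)).

Definition cart t : int * int :=
  match t with A2 => (-1, -1) | B2 => (-1, -2) | G2 => (-3, -1) end.
Definition Pz t (z : int * int) (b : int * int) : int :=
  z.1 * (2 * b.1 + (cart t).1 * b.2) + z.2 * ((cart t).2 * b.1 + 2 * b.2).
Definition thcov t : int * int := match t with G2 => (1, 2) | _ => (1, 1) end.
Definition genn t (n : nat) : st :=
  match n with
  | 0%N => let h1 := Pz t (1, 0) (highest_root t) in
           let h2 := Pz t (0, 1) (highest_root t) in
           let u := thcov t in
           ((1 - u.1 * h1, - (u.1 * h2), - (u.2 * h1), 1 - u.2 * h2), u)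
  | 1%N => ((-1, - (cart t).2, 0, 1), (0, 0))
  | _ => ((1, 0, - (cart t).1, -1), (0, 0))
  end.
Definition gen t (j : 'I_3) : st := genn t (val j).
Definition state t (w : seq 'I_3) : st := foldr (fun j S => scomp (gen t j) S) sid w.

Definition g22 t : int := match t with A2 => 2 | B2 => 1 | G2 => 6 end.
Definition toZ t (v : V) : R * R := (v.1, v.2 * (g22 t)%:~R / 2).
Definition fromZ t (z : R * R) : V := (z.1, z.2 * 2 / (g22 t)%:~R).
Definition sapply t (S : st) (v : V) : V :=
  let: ((a, b, c, d), (l1, l2)) := S in
  let z := toZ t v in
  fromZ t (a%:~R * z.1 + b%:~R * z.2 + l1%:~R, c%:~R * z.1 + d%:~R * z.2 + l2%:~R).

Lemma g22_neq0 t : ((g22 t)%:~R : R) != 0.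
Proof. by case: t; rewrite intr_eq0. Qed.

Lemma apply_comp t S T v : sapply t (scomp S T) v = sapply t S (sapply t T v).
Proof.
case: S => [[[[a b] c] d] [l1 l2]]; case: T => [[[[e f] g] h] [m1 m2]].
case: v => x y; rewrite /sapply /scomp /mmul /mvec /toZ /fromZ /=.
have := g22_neq0 t => H.
congr pair; field => //.
Qed.

Lemma apply_gen t j v : sapply t (gen t j) v = sgen t j v.
Proof.
case: v => x y.
case: j => [[|[|[|//]]] Hj]; case: t;
rewrite /sapply /gen /genn /sgen /refl /pairing /ip /rvec /gram /toZ /fromZ /Pz /cart /thcov /g22 /=;
congr pair; field => //.
Qed.

Lemma apply_sid t v : sapply t sid v = v.
Proof. case: v => x y; rewrite /sapply /sid /toZ /fromZ /=. have := g22_neq0 t => H. congr pair; field => //. Qed.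

Lemma act_state t w : act t w = sapply t (state t w).
Proof.
apply: funext => v; elim: w => [|j w IH]; first exact: (esym (apply_sid t v)).
have -> : state t (j :: w) = scomp (gen t j) (state t w) by [].
by rewrite apply_comp apply_gen -IH.
Qed.

Definition W0list t : seq mat := match t with
  | A2 => [:: (1, 0, 0, 1); (-1, 1, 0, 1); (1, 0, 1, -1); (0, -1, 1, -1); (-1, 1, -1, 0); (0, -1, -1, 0)]
  | B2 => [:: (1, 0, 0, 1); (-1, 2, 0, 1); (1, 0, 1, -1); (1, -2, 1, -1); (-1, 2, -1, 1); (-1, 0, -1, 1); (1, -2, 0, -1); (-1, 0, 0, -1)]
  | G2 => [:: (1, 0, 0, 1); (-1, 1, 0, 1); (1, 0, 3, -1); (2, -1, 3, -1); (-1, 1, -3, 2); (-2, 1, -3, 2); (2, -1, 3, -2); (1, -1, 3, -2); (-2, 1, -3, 1); (-1, 0, -3, 1); (1, -1, 0, -1); (-1, 0, 0, -1)]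
  end.

Definition valid t (S : st) := S.1 \in W0list t.

Lemma W0closed_check t :
  all (fun M => all (fun n => (mmul M (genn t n).1 \in W0list t) && (mmul (genn t n).1 M \in W0list t)) (iota 0 3)) (W0list t).
Proof. by case: t; vm_compute. Qed.

Lemma W0mul_check t :
  all (fun M => all (fun N => mmul M N \in W0list t) (W0list t)) (W0list t).
Proof. by case: t; vm_compute. Qed.

Lemma ord3_iota (j : 'I_3) : val j \in iota 0 3.
Proof. by case: j => [[|[|[|//]]] ?]. Qed.

Lemma valid_right t S j : valid t S -> valid t (scomp S (gen t j)).
Proof.
move=> HS; have /allP/(_ _ HS)/allP/(_ _ (ord3_iota j))/andP[H1 _] := W0closed_check t.
exact: H1.
Qed.

Lemma valid_left t S j : valid t S -> valid t (scomp (gen t j) S).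
Proof.
move=> HS; have /allP/(_ _ HS)/allP/(_ _ (ord3_iota j))/andP[_ H1] := W0closed_check t.
exact: H1.
Qed.

Lemma valid_sid t : valid t sid.
Proof. by case: t. Qed.

Lemma valid_state t w : valid t (state t w).
Proof. elim: w => [|j w IH]; [exact: valid_sid | exact: valid_left]. Qed.

Lemma comp_assoc S T U : scomp S (scomp T U) = scomp (scomp S T) U.
Proof.
case: S => [[[[a b] c] d] [l1 l2]]; case: T => [[[[e f] g] h] [m1 m2]].
case: U => [[[[a' b'] c'] d'] [n1 n2]].
rewrite /scomp /mmul /mvec /=; congr ((_, _, _, _), (_, _)); ring.
Qed.

Lemma comp_sidl S : scomp sid S = S.
Proof.
case: S => [[[[a b] c] d] [l1 l2]]; rewrite /scomp /mmul /mvec /=; congr ((_, _, _, _), (_, _)); ring.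
Qed.

Lemma comp_sidr S : scomp S sid = S.
Proof.
case: S => [[[[a b] c] d] [l1 l2]]; rewrite /scomp /mmul /mvec /=; congr ((_, _, _, _), (_, _)); ring.
Qed.

Lemma state_cat t w u : state t (w ++ u) = scomp (state t w) (state t u).
Proof.
elim: w => [|j w IH]; first by rewrite comp_sidl.
have -> : state t ((j :: w) ++ u) = scomp (gen t j) (state t (w ++ u)) by [].
have -> : state t (j :: w) = scomp (gen t j) (state t w) by [].
by rewrite IH comp_assoc.
Qed.

Lemma state_rcons t w j : state t (rcons w j) = scomp (state t w) (gen t j).
Proof. by rewrite -cats1 state_cat /= comp_sidr. Qed.

Lemma gen_invol t j : scomp (gen t j) (gen t j) = sid.
Proof. by case: j => [[|[|[|//]]] ?]; case: t; vm_compute. Qed.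

Lemma toZ_fromZ t z : toZ t (fromZ t z) = z.
Proof. case: z => x y; rewrite /toZ /fromZ /=; have := g22_neq0 t => H; congr pair; field => //. Qed.

Lemma apply_fromZ t S x y :
  sapply t S (fromZ t (x, y)) =
  fromZ t ((S.1.1.1.1)%:~R * x + (S.1.1.1.2)%:~R * y + (S.2.1)%:~R,
           (S.1.1.2)%:~R * x + (S.1.2)%:~R * y + (S.2.2)%:~R).
Proof.
case: S => [[[[a b] c] d] [l1 l2]]; rewrite /sapply toZ_fromZ //.
Qed.

Lemma fromZ_inj t z z' : fromZ t z = fromZ t z' -> z = z'.
Proof. by move=> /(congr1 (toZ t)); rewrite !toZ_fromZ. Qed.

Lemma apply_inj t S T : sapply t S = sapply t T -> S = T.
Proof.
move=> H.
have H0 := @fromZ_inj t _ _ (etrans (esym (apply_fromZ t S 0 0)) (etrans (congr1 (fun f => f _) H) (apply_fromZ t T 0 0))).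
have H1 := @fromZ_inj t _ _ (etrans (esym (apply_fromZ t S 1 0)) (etrans (congr1 (fun f => f _) H) (apply_fromZ t T 1 0))).
have H2 := @fromZ_inj t _ _ (etrans (esym (apply_fromZ t S 0 1)) (etrans (congr1 (fun f => f _) H) (apply_fromZ t T 0 1))).
case: S H0 H1 H2 {H} => [[[[a b] c] d] [l1 l2]]; case: T => [[[[e f] g] h] [m1 m2]] /=.
case=> E1 E2; case=> E3 E4; case=> E5 E6.
have e1 : (l1%:~R : R) = m1%:~R by lra.
have e2 : (l2%:~R : R) = m2%:~R by lra.
have e3 : (a%:~R : R) = e%:~R by lra.
have e4 : (b%:~R : R) = f%:~R by lra.
have e5 : (c%:~R : R) = g%:~R by lra.
have e6 : (d%:~R : R) = h%:~R by lra.
by rewrite (intr_inj e1) (intr_inj e2) (intr_inj e3) (intr_inj e4) (intr_inj e5) (intr_inj e6).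
Qed.

Lemma act_inj t u w : act t u = act t w -> state t u = state t w.
Proof. by rewrite !act_state => /apply_inj. Qed.

Set Implicit Arguments. Unset Strict Implicit.

Definition q0 t : int * int := match t with A2 => (6, 6) | B2 => (9, 6) | G2 => (7, 12) end.
Definition Kb t (M : mat) (b : int * int) : int := if Pz t (mvec M (q0 t)) b < 0 then -1 else 0.
Definition xs t (l : int * int) := [seq Pz t l b | b <- pos_roots t].
Definition ks t M := [seq Kb t M b | b <- pos_roots t].
Definition fvx (x k : seq int) := [seq y.1 + y.2 | y <- zip x k].
Definition fv t (S : st) := fvx (xs t S.2) (ks t S.1).
Definition Fs t (S : st) : nat := sumn [seq absz y | y <- fv t S].

Definition ks' t M (j : nat) :=
  [seq Pz t (mvec M (genn t j).2) b + Kb t (mmul M (genn t j).1) b | b <- pos_roots t].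
Definition wallp t M j := find (fun y : int * int => y.1 != y.2) (zip (ks t M) (ks' t M j)).
Definition walls t M j := nth (0:int) (ks' t M j) (wallp t M j) - nth (0:int) (ks t M) (wallp t M j).
Definition wallok t M j :=
  [&& (wallp t M j < size (pos_roots t))%N,
      ks' t M j == set_nth (0:int) (ks t M) (wallp t M j) (nth (0:int) (ks t M) (wallp t M j) + walls t M j)
    & (walls t M j == 1) || (walls t M j == -1)].

Lemma wall_check t : all (fun M => all (wallok t M) (iota 0 3)) (W0list t).
Proof. by case: t; vm_compute. Qed.

Lemma size_ks t M : size (ks t M) = size (pos_roots t).
Proof. by rewrite size_map. Qed.
Lemma size_xs t l : size (xs t l) = size (pos_roots t).
Proof. by rewrite size_map. Qed.

Lemma fv_right t S j :
  fv t (scomp S (gen t j)) = fvx (xs t S.2) (ks' t S.1 (val j)).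
Proof.
rewrite /fv /xs /ks /ks' /gen /fvx.
case: S => [M [l1 l2]] /=.
elim: (pos_roots t) => [|b bs IH] //=; rewrite IH; congr cons.
rewrite /Pz /=; ring.
Qed.

Lemma sumabs_set (x k : seq int) p (s : int) :
  (p < size x)%N -> size k = size x ->
  (sumn [seq absz y | y <- fvx x (set_nth (0:int) k p (nth (0:int) k p + s)%R)] + absz (nth (0:int) x p + nth (0:int) k p)%R)%N =
  (sumn [seq absz y | y <- fvx x k] + absz (nth (0:int) x p + (nth (0:int) k p + s))%R)%N.
Proof.
rewrite /fvx; elim: x k p => [|a x IH] [|b k] [|p] //= Hp [Hs].
- lia.
- by rewrite -!addnA IH.
Qed.

Lemma nth_fvx (x k : seq int) p : (p < size x)%N -> size k = size x ->
  nth (0:int) (fvx x k) p = nth (0:int) x p + nth (0:int) k p.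
Proof.
elim: x k p => [|a x IH] [|b k] [|p] //= Hp [Hs]; exact: IH.
Qed.

Lemma wallok_valid t S (j : 'I_3) : valid t S -> wallok t S.1 (val j).
Proof.
move=> HS; have /allP/(_ _ HS)/allP/(_ _ (ord3_iota j)) := wall_check t; done.
Qed.

Definition fw t S j := nth (0:int) (fv t S) (wallp t S.1 j).

Lemma Fs_right t S (j : 'I_3) : valid t S ->
  (Fs t (scomp S (gen t j)) + absz (fw t S (val j)))%N =
  (Fs t S + absz (fw t S (val j) + walls t S.1 (val j))%R)%N.
Proof.
move=> HS; have /and3P[Hp /eqP Hk _] := wallok_valid j HS.
rewrite /Fs fv_right Hk /fw /fv nth_fvx ?size_xs ?size_ks //.
rewrite sumabs_set ?size_xs ?size_ks //; by rewrite addrA.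
Qed.

Lemma walls_pm t S (j : 'I_3) : valid t S -> walls t S.1 (val j) = 1 \/ walls t S.1 (val j) = -1.
Proof.
move=> HS; have /and3P[_ _ /orP[/eqP->|/eqP->]] := wallok_valid j HS; by [left|right].
Qed.

Lemma desc_iff t S (j : 'I_3) : valid t S ->
  (Fs t (scomp S (gen t j)) < Fs t S)%N <-> (walls t S.1 (val j) * fw t S (val j) < 0).
Proof.
move=> HS; have E := Fs_right j HS.
case: (walls_pm j HS) E => -> E; split; lia.
Qed.

Lemma up1 t S (j : 'I_3) : valid t S -> (Fs t (scomp S (gen t j)) <= (Fs t S).+1)%N.
Proof.
move=> HS; have E := Fs_right j HS.
case: (walls_pm j HS) E => -> E; lia.
Qed.

Lemma in_list_ind (T : eqType) (s : seq T) (P : T -> Prop) :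
  foldr (fun x acc => P x /\ acc) True s -> forall x, x \in s -> P x.
Proof.
elim: s => [|y s IH] //= [Py Hs] x; rewrite in_cons => /orP[/eqP -> //|]; exact: IH.
Qed.

Definition o1 : 'I_3 := Ordinal (isT : (1 < 3)%N).
Definition o2 : 'I_3 := Ordinal (isT : (2 < 3)%N).

Definition noDescP t M := forall l1 l2 : int,
  0 <= walls t M 0 * fw t (M, (l1, l2)) 0 ->
  0 <= walls t M 1 * fw t (M, (l1, l2)) 1 ->
  0 <= walls t M 2 * fw t (M, (l1, l2)) 2 ->
  M = (1, 0, 0, 1) /\ l1 = 0 /\ l2 = 0.

Lemma noDesc_M t M : M \in W0list t -> noDescP t M.
Proof.
move: M; case: t; apply: (in_list_ind (P := noDescP _)); rewrite /=; repeat match goal with |- _ /\ _ => split end; try exact I;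
move=> l1 l2; rewrite /fw /walls /wallp /fv /xs /ks /ks' /fvx /Kb /Pz /=;
first [ move=> *; split; [reflexivity | lia] | move=> *; exfalso; lia ].
Qed.

Definition finalP t (i : nat) M := forall l1 l2 : int,
  has (fun b => Pz t (l1, l2) b + Kb t M b == 0) (pos_roots t) ->
  walls t M 0 * fw t (M, (l1, l2)) 0 < 0 ->
  walls t M i * fw t (M, (l1, l2)) i < 0 ->
  0 <= walls t M (3 - i) * fw t (M, (l1, l2)) (3 - i) ->
  forall k, (k < size (pos_roots t))%N ->
  (nth (0:int) (ks t (mmul M (genn t i).1)) k = -1) <-> (1 <= nth (0:int) (xs t (l1, l2)) k).

Ltac finalTac :=
  let l1 := fresh "l1" in let l2 := fresh "l2" in
  move=> l1 l2; rewrite /fw /walls /wallp /fv /xs /ks /ks' /fvx /Kb /Pz /=;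
  move=> Hh H0 Hi Ho;
  case=> [|[|[|[|[|[|k]]]]]] //= _; lia.

Lemma final_G2 M : M \in W0list G2 -> finalP G2 2 M.
Proof.
move: M; apply: (in_list_ind (P := finalP _ _)); rewrite /=;
repeat match goal with |- _ /\ _ => split end; try exact I; finalTac.
Qed.

Lemma final_A2_1 M : M \in W0list A2 -> finalP A2 1 M.
Proof.
move: M; apply: (in_list_ind (P := finalP _ _)); rewrite /=;
repeat match goal with |- _ /\ _ => split end; try exact I; finalTac.
Qed.
Lemma final_A2_2 M : M \in W0list A2 -> finalP A2 2 M.
Proof.
move: M; apply: (in_list_ind (P := finalP _ _)); rewrite /=;
repeat match goal with |- _ /\ _ => split end; try exact I; finalTac.
Qed.
Lemma final_B2_2 M : M \in W0list B2 -> finalP B2 2 M.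
Proof.
move: M; apply: (in_list_ind (P := finalP _ _)); rewrite /=;
repeat match goal with |- _ /\ _ => split end; try exact I; finalTac.
Qed.

Lemma Fs_sid t : Fs t sid = 0%N.
Proof. by case: t; vm_compute. Qed.

Lemma Fs_le_size t u : (Fs t (state t u) <= size u)%N.
Proof.
elim/last_ind: u => [|u j IH]; first by rewrite /= Fs_sid.
rewrite state_rcons size_rcons.
apply: leq_trans (up1 j (valid_state t u)) _; by rewrite ltnS.
Qed.

Lemma noDesc t S : valid t S ->
  (forall j : 'I_3, 0 <= walls t S.1 (val j) * fw t S (val j)) -> S = sid.
Proof.
case: S => M [l1 l2] HM H.
have := noDesc_M HM (H ord0) (H o1) (H o2).
by move=> /= [-> [-> ->]].
Qed.

Lemma exists_word t n w : Fs t (state t w) = n ->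
  exists u, (size u <= n)%N /\ act t u = act t w.
Proof.
elim: n {-2}n (leqnn n) w => [|n IH] m Hm w Hw.
  have Hs : state t w = sid.
    apply: noDesc (valid_state t w) _ => j.
    case: (lerP 0 (walls t (state t w).1 (val j) * fw t (state t w) (val j))) => // /(desc_iff j (valid_state t w)).
    rewrite Hw; lia.
  exists [::]; split => //; rewrite !act_state Hs //.
have HS := valid_state t w.
case: (boolP [forall j : 'I_3, 0 <= walls t (state t w).1 (val j) * fw t (state t w) (val j)]) => Hall.
  have Hs : state t w = sid by apply: noDesc HS _ => j; exact: (forallP Hall j).
  exists [::]; split => //; rewrite !act_state Hs //.
move: Hall; rewrite negb_forall => /existsP [j Hj].
have Hlt : (Fs t (scomp (state t w) (gen t j)) < Fs t (state t w))%N.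
  by apply/(desc_iff j HS); rewrite ltNge.
have Hle : (Fs t (state t (rcons w j)) <= n)%N.
  by rewrite state_rcons; lia.
have [u' [Hu' Ha']] := IH _ Hle (rcons w j) erefl.
exists (rcons u' j); split; first by rewrite size_rcons; rewrite state_rcons in Hu'; lia.
rewrite !act_state state_rcons (@act_inj _ _ _ Ha') state_rcons -comp_assoc gen_invol comp_sidr //.
Qed.

Lemma len_Fs t w : len t w = Fs t (state t w).
Proof.
rewrite /len; case: ex_minnP => m /asboolP [u [Hu Hact]] Hmin.
have [u0 [Hs0 Ha0]] := exists_word (erefl (Fs t (state t w))).
apply/eqP; rewrite eqn_leq; apply/andP; split.
  apply: leq_trans (Hmin (size u0) _) Hs0; by apply/asboolP; exists u0.
by rewrite -(@act_inj _ _ _ Hact) -Hu Fs_le_size.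
Qed.

Lemma pref_sum (x e f : seq int) : size e = size x -> size f = size x ->
  all (fun v => (v == 0) || (v == -1)) e ->
  (forall k, (k < size x)%N -> nth (0:int) f k = if 1 <= nth (0:int) x k then -1 else 0) ->
  (sumn [seq absz y | y <- fvx x f] <= sumn [seq absz y | y <- fvx x e])%N /\
  (e != f -> (sumn [seq absz y | y <- fvx x f] < sumn [seq absz y | y <- fvx x e])%N).
Proof.
rewrite /fvx; elim: x e f => [|a x IH] [|b e] [|c f] //= [He] [Hf] /andP[Hb Hall] Hk.
have Hc := Hk 0%N isT; rewrite /= in Hc.
have [IH1 IH2] := IH e f He Hf Hall (fun k Hk' => Hk k.+1 Hk').
have Hhead : (absz (a + c)%R <= absz (a + b)%R)%N /\ (b != c -> (absz (a + c)%R < absz (a + b)%R)%N).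
  move: Hb Hc; case: (lerP 1 a) => Ha /orP[/eqP->|/eqP->] ->; split => //=; lia.
case: Hhead => H1 H2; split; first exact: leq_add H1 IH1.
rewrite eqseq_cons negb_and => /orP[/H2 h|/IH2 h].
  by rewrite -addSn; apply: leq_add.
by rewrite -addnS; apply: leq_add.
Qed.

Definition c0 t : V := fromZ t ((q0 t).1%:~R / 18, (q0 t).2%:~R / 18).

Lemma pairing_apply t S b :
  pairing t (sapply t S (c0 t)) b = (Pz t (mvec S.1 (q0 t)) b + 18 * Pz t S.2 b)%:~R / 18.
Proof.
case: S => [[[[a0 b0] c1] d0] [l1 l2]]; case: b => b1 b2.
case: t; rewrite /pairing /sapply /c0 /ip /gram /rvec /toZ /fromZ /Pz /mvec /cart /q0 /g22 /=;
field => //.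
Qed.

Definition P0 t b := Pz t (mvec (1, 0, 0, 1) (q0 t)) b + 18 * Pz t (0, 0) b.

Lemma P0_check t : all (fun b => (0 < P0 t b) && (P0 t b < 18)) (pos_roots t).
Proof. by case: t; vm_compute. Qed.

Lemma Kb_check t : all (fun M => all (fun b => (Pz t (mvec M (q0 t)) b != 0) &&
  (-18 < Pz t (mvec M (q0 t)) b) && (Pz t (mvec M (q0 t)) b < 18)) (pos_roots t)) (W0list t).
Proof. by case: t; vm_compute. Qed.

Lemma ltr_div18 (c P : int) : (c%:~R < P%:~R / 18 :> R) -> c * 18 < P.
Proof.
move=> H; have E : ((c * 18)%:~R : R) = c%:~R * 18 by ring.
by rewrite -(ltr_int R) E; lra.
Qed.
Lemma ltr_div18' (c P : int) : (P%:~R / 18 < c%:~R :> R) -> P < c * 18.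
Proof.
move=> H; have E : ((c * 18)%:~R : R) = c%:~R * 18 by ring.
by rewrite -(ltr_int R) E; lra.
Qed.

Lemma int01 (P : int) : 0 < P -> P < 18 -> 0 < (P%:~R : R) / 18 < 1.
Proof.
move=> H1 H2; rewrite -(ltr_int R) in H1; rewrite -(ltr_int R) in H2.
apply/andP; split; lra.
Qed.

Lemma A0_c0 t : A0 t (c0 t).
Proof.
move=> b Hb; rewrite -(apply_sid t (c0 t)) pairing_apply.
have /allP/(_ _ Hb)/andP[H1 H2] := P0_check t.
exact: int01.
Qed.

Lemma Pz_neg t z (b : int * int) : Pz t z (- b.1, - b.2) = - Pz t z b.
Proof. rewrite /Pz /=; ring. Qed.

Lemma floor_lem (r X c : int) : r != 0 -> -18 < r -> r < 18 ->
  c * 18 < r + 18 * X -> r + 18 * X < (c + 1) * 18 -> c = 0 ->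
  X + (if r < 0 then -1 else 0) = 0.
Proof. move=> H0 H1 H2 H3 H4 Hc; case: ifP => Hr; lia. Qed.

Lemma strip_has t w b c : b \in root_list t ->
  in_strip t b c (alcove t w) -> in_strip t b c (A0 t) ->
  has (fun be => Pz t (state t w).2 be + Kb t (state t w).1 be == 0) (pos_roots t).
Proof.
move=> Hb Hw HA.
have H1 := Hw (sapply t (state t w) (c0 t)).
have H2 := HA (c0 t) (@A0_c0 t).
have /H1 {H1} H1 : alcove t w (sapply t (state t w) (c0 t)).
  by exists (c0 t); [exact: (@A0_c0 t) | rewrite act_state].
rewrite pairing_apply in H1; rewrite -(apply_sid t (c0 t)) pairing_apply in H2.
case/andP: H1 => H1a H1b; case/andP: H2 => H2a H2b.
have {H1a} H1a := ltr_div18 H1a; have {H1b} H1b := ltr_div18' H1b.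
have {H2a} H2a := ltr_div18 H2a; have {H2b} H2b := ltr_div18' H2b.
have HM := valid_state t w.
move: Hb; rewrite mem_cat => /orP[Hb | /mapP [be Hbe Eb]].
- apply/hasP; exists b => //.
  have /allP/(_ _ Hb)/andP[H3 H4] := P0_check t.
  have /allP/(_ _ HM)/allP/(_ _ Hb)/andP[/andP[H5 H6] H7] := Kb_check t.
  have E0 : Pz t (mvec sid.1 (q0 t)) b + 18 * Pz t sid.2 b = P0 t b by [].
  rewrite E0 in H2a H2b.
  apply/eqP; rewrite /Kb; apply: (floor_lem H5 H6 H7 H1a H1b); lia.
- apply/hasP; exists be => //.
  have /allP/(_ _ Hbe)/andP[H3 H4] := P0_check t.
  have /allP/(_ _ HM)/allP/(_ _ Hbe)/andP[/andP[H5 H6] H7] := Kb_check t.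
  have E0 : Pz t (mvec sid.1 (q0 t)) b + 18 * Pz t sid.2 b = - P0 t be.
    by rewrite Eb /P0 !Pz_neg; ring.
  have E1 : Pz t (mvec (state t w).1 (q0 t)) b + 18 * Pz t (state t w).2 b =
     - (Pz t (mvec (state t w).1 (q0 t)) be + 18 * Pz t (state t w).2 be).
    by rewrite Eb !Pz_neg; ring.
  rewrite E0 in H2a H2b; rewrite E1 in H1a H1b.
  apply/eqP; rewrite /Kb; apply: (floor_lem (c := 0) H5 H6 H7); lia.
Qed.

Lemma mvec0 M : mvec M (0, 0) = (0, 0).
Proof. case: M => [[[a b] c] d]; rewrite /mvec /=; congr pair; ring. Qed.

Lemma scomp0 M l1 l2 N : scomp (M, (l1, l2)) (N, (0, 0)) = (mmul M N, (l1, l2)).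
Proof. by rewrite /scomp /= mvec0 /= !add0r. Qed.

Lemma genn_snd t n : n != 0%N -> (genn t n).2 = (0, 0).
Proof. by case: n => [|[|n]]. Qed.

Lemma state_W0 t u : W0word u -> (state t u).2 = (0, 0) /\ valid t (state t u).
Proof.
elim: u => [|j u IH]; first by split => //; exact: valid_sid.
move=> /andP [Hj /IH [H2 H1]].
have -> : state t (j :: u) = scomp (gen t j) (state t u) by [].
split; last exact: valid_left.
case E : (state t u) H2 => [N [n1 n2]] /= [-> ->].
by rewrite /scomp /= mvec0 /gen (genn_snd t Hj) /= !addr0.
Qed.

Lemma ks_inj_check t : all (fun M => all (fun N => (ks t M == ks t N) ==> (M == N)) (W0list t)) (W0list t).
Proof. by case: t; vm_compute. Qed.

Lemma ks_inj t M N : M \in W0list t -> N \in W0list t -> ks t M = ks t N -> M = N.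
Proof.
move=> HM HN E; have /allP/(_ _ HM)/allP/(_ _ HN) := ks_inj_check t.
by rewrite E eqxx /= => /eqP.
Qed.

Lemma ks_01 t M : all (fun v => (v == 0) || (v == -1)) (ks t M).
Proof. rewrite /ks all_map; apply/allP => b _ /=; rewrite /Kb; by case: ifP. Qed.

Lemma mulW0 t M N : M \in W0list t -> N \in W0list t -> mmul M N \in W0list t.
Proof. move=> HM HN; have /allP/(_ _ HM)/allP/(_ _ HN) := W0mul_check t; done. Qed.

Lemma act_sid_id t w : state t w = sid -> act t w = id.
Proof. move=> E; rewrite act_state E; apply: funext => v; exact: apply_sid. Qed.

Lemma final_any t (i : 'I_3) M l1 l2 :
  (val i = 1%N \/ val i = 2%N) ->
  M \in W0list t ->
  act t [:: ord0; i; ord0; i] <> id ->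
  has (fun b => Pz t (l1, l2) b + Kb t M b == 0) (pos_roots t) ->
  walls t M 0 * fw t (M, (l1, l2)) 0 < 0 ->
  walls t M (val i) * fw t (M, (l1, l2)) (val i) < 0 ->
  0 <= walls t M (3 - val i) * fw t (M, (l1, l2)) (3 - val i) ->
  forall k, (k < size (pos_roots t))%N ->
  (nth (0:int) (ks t (mmul M (gen t i).1)) k = -1) <-> (1 <= nth (0:int) (xs t (l1, l2)) k).
Proof.
move=> Hi HM Hne; rewrite /gen.
case: Hi => Hv; rewrite Hv; case: t HM Hne => HM Hne.
- exact: (final_A2_1 HM).
- exfalso; apply: Hne; apply: act_sid_id.
  have -> : i = o1 by apply: val_inj; rewrite Hv.
  by vm_compute.
- exfalso; apply: Hne; apply: act_sid_id.
  have -> : i = o1 by apply: val_inj; rewrite Hv.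
  by vm_compute.
- exact: (final_A2_2 HM).
- exact: (final_B2_2 HM).
- exact: (final_G2 HM).
Qed.

Unset Implicit Arguments.

Theorem proposition4p41 (t : rs_type) (w : seq 'I_3) (i : 'I_3) :
  (val i = 1%N \/ val i = 2%N) ->
  (exists b : int * int, exists c : int,
     b \in root_list t /\ in_strip t b c (alcove t w) /\ in_strip t b c (A0 t)) ->
  (forall j : 'I_3, (len t (rcons w j) < len t w)%N <-> (val j = 0%N \/ j = i)) ->
  act t [:: ord0; i; ord0; i] <> id ->
  forall u : seq 'I_3, W0word u ->
    act t (w ++ u) <> act t (rcons w i) ->
    (len t (rcons w i) < len t (w ++ u))%N.
Proof.
move=> Hi [b [c [Hb [Hsw HsA]]]] Hd Hne u Hu Hact.
have Hhas := strip_has Hb Hsw HsA.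
have HS := valid_state t w.
have Hd' : forall j : 'I_3, (walls t (state t w).1 (val j) * fw t (state t w) (val j) < 0)
   <-> (val j = 0%N \/ j = i).
  move=> j; split => H.
    apply/Hd; rewrite !len_Fs state_rcons; exact/(desc_iff j HS).
  apply/(desc_iff j HS); have := proj2 (Hd j) H; by rewrite !len_Fs state_rcons.
have Hi0 : i != ord0 by apply/eqP => E; rewrite E in Hi; case: Hi.
have Hi2 : (3 - val i < 3)%N by case: Hi => ->.
pose io : 'I_3 := Ordinal Hi2.
have H0 := proj2 (Hd' ord0) (or_introl erefl).
have H1 := proj2 (Hd' i) (or_intror erefl).
have H2 : 0 <= walls t (state t w).1 (val io) * fw t (state t w) (val io).
  rewrite leNgt; apply/negP => /(proj1 (Hd' io)) [] /=; first by case: Hi => ->.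
  by move=> /(congr1 val) /=; case: Hi => ->.
have [Hu2 Hu1] := state_W0 t Hu.
rewrite !len_Fs state_cat state_rcons.
move: Hhas H0 H1 H2 HS Hu1 Hu2 Hact.
rewrite !act_state state_cat state_rcons.
case: (state t w) => M [l1 l2]; case: (state t u) => N [n1 n2] /=.
move=> Hhas H0 H1 H2 HM HN [-> ->] Hact.
have Hg2 : (gen t i).2 = (0, 0) by apply: genn_snd; case: Hi => ->.
have Hgi : gen t i = ((gen t i).1, (0, 0)) by rewrite -Hg2; case: (gen t i).
rewrite Hgi !scomp0 in Hact *.
have HMi : mmul M (gen t i).1 \in W0list t.
  have := valid_right t (M, (l1, l2)) i HM.
  by rewrite Hgi scomp0.
have HMN : mmul M N \in W0list t by exact: mulW0.
have Hpref := final_any Hi HM Hne Hhas H0 H1 H2.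
have Hne' : ks t (mmul M N) != ks t (mmul M (gen t i).1).
  apply/negP => /eqP /(ks_inj HMN HMi) E; apply: Hact; by rewrite E.
rewrite /Fs /fv /=.
have Hse : size (ks t (mmul M N)) = size (xs t (l1, l2)) by rewrite size_ks size_xs.
have Hsf : size (ks t (mmul M (gen t i).1)) = size (xs t (l1, l2)) by rewrite size_ks size_xs.
have Hp : forall k, (k < size (xs t (l1, l2)))%N ->
    nth (0:int) (ks t (mmul M (gen t i).1)) k = if 1 <= nth (0:int) (xs t (l1, l2)) k then -1 else 0.
  move=> k; rewrite size_xs => Hk.
  have := (all_nthP (0:int) (ks_01 t (mmul M (gen t i).1))) k; rewrite size_ks => /(_ Hk).
  have := Hpref k Hk => -[Hp1 Hp2].
  case: ifP => Hx; first by move=> _; exact: (Hp2 Hx).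
  case/orP => /eqP // E; by move: (Hp1 E); rewrite Hx.
exact: (proj2 (pref_sum Hse Hsf (ks_01 t _) Hp) Hne').
Qed.
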